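(* Let $(X,\mathcal{A})$ be a measurable space, $f,g\in\mathcal{F}_{[0,1]}^{(X,\mathcal{A})}$ comonotone, $\star:[0,1]^2\to[0,1]$ continuous and non-decreasing in both arguments, and let the semicopula $\circledast$ be a continuous t-norm. Let $\alpha,\beta,\gamma,\lambda,\upsilon,\tau\in(0,\infty)$ satisfy $0<\alpha\lambda\le1$, $1\le\beta\upsilon<\infty$, $1\le\gamma\tau<\infty$, $\lambda\le\tau$, $\lambda\le\upsilon$, $\alpha\le\beta$, $\alpha\le\gamma$, and assume that $(\cdot)^{\alpha}$ is superdistributive over $\circledast$ and that $\circledast^{\lambda}$ dominates $\circledast$. Then for every monotone measure $m$ on $(X,\mathcal{A})$ with $m(X)=1$, \[ \big[\mathbf{I}_\circledast(m,(f\circledast g)^{\alpha})\big]^{\lambda}\ \ge\ \big[\mathbf{I}_\circledast(m,f^{\beta})\big]^{\upsilon}\circledast\big[\mathbf{I}_\circledast(m,g^{\gamma})\big]^{\tau}, \] where $(f\circledast g)(x)=f(x)\circledast g(x)$.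
   Context: A monotone measure on $(X,\mathcal{A})$ is $m:\mathcal{A}\to[0,\infty]$ with $m(\emptyset)=0$, $m(X)>0$, $m(A)\le m(B)$ for $A\subseteq B$. $\mathcal{F}_{[0,1]}^{(X,\mathcal{A})}$ is the set of $\mathcal{A}$-measurable $f:X\to[0,1]$. A semicopula is $\circledast:[0,1]^2\to[0,1]$, non-decreasing in both components, with neutral element $1$ and $a\circledast b\le\min(a,b)$; a t-norm is an associative commutative semicopula. $\mathbf{I}_\circledast(m,f)=\sup\{t\circledast m(\{f\ge t\}) : t\in[0,1]\}$. $(\cdot)^\alpha$ superdistributive over $\circledast$ means $(x\circledast y)^\alpha\ge x^\alpha\circledast y^\alpha$ for all $x,y$. For binary operations $A,B$, $A$ dominates $B$ if $A(B(a,b),B(c,d))\ge B(A(a,c),A(b,d))$ for all $a,b,c,d$; $\circledast^{\lambda}$ denotes the operation $(x,y)\mapsto(x\circledast y)^{\lambda}$. $f,g$ are comonotone if $(f(x)-f(y))(g(x)-g(y))\ge0$ for all $x,y$. *)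

(* Defs.v *)
From HB Require Import structures.
From mathcomp Require Import all_boot all_order all_algebra.
From mathcomp Require Import all_classical all_reals all_analysis.
Set Implicit Arguments. Unset Strict Implicit. Unset Printing Implicit Defensive.
Import Order.TTheory GRing.Theory Num.Theory.
Import numFieldNormedType.Exports.
Local Open Scope classical_set_scope.
Local Open Scope ring_scope.

Section Defs.
Context {d : measure_display} {T : measurableType d} {R : realType}.

Definition monotone_measure (m : set T -> \bar R) : Prop :=
  [/\ m set0 = 0%E, (0 < m setT)%E &
      forall A B, measurable A -> measurable B -> A `<=` B -> (m A <= m B)%E].

Definition unit_meas_fun (f : T -> R) : Prop :=
  measurable_fun setT f /\ forall x, 0 <= f x <= 1.

Definition comonotone (f g : T -> R) : Prop :=
  forall x y, 0 <= (f x - f y) * (g x - g y).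

(* Sugeno-like integral I_op(m,f) = sup { op t (m {f >= t}) | t in [0,1] };
   m has values in [0,1] when m(X)=1 and m is monotone, so we use fine. *)
Definition Iint (op : R -> R -> R) (m : set T -> \bar R) (f : T -> R) : R :=
  sup [set op t (fine (m [set x | t <= f x])) | t in [set t : R | 0 <= t <= 1]].
End Defs.

Section Ops.
Context {R : realType}.

Definition in01 (x : R) : bool := (0 <= x <= 1).

Definition semicopula (op : R -> R -> R) : Prop :=
  [/\ (forall a b, in01 a -> in01 b -> in01 (op a b)),
      (forall a a' b, in01 a -> in01 a' -> in01 b -> a <= a' -> op a b <= op a' b),
      (forall a b b', in01 a -> in01 b -> in01 b' -> b <= b' -> op a b <= op a b'),
      (forall a, in01 a -> op a 1 = a /\ op 1 a = a) &
      (forall a b, in01 a -> in01 b -> op a b <= Num.min a b)].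

Definition tnorm (op : R -> R -> R) : Prop :=
  [/\ semicopula op,
      (forall a b c, in01 a -> in01 b -> in01 c -> op a (op b c) = op (op a b) c) &
      (forall a b, in01 a -> in01 b -> op a b = op b a)].

Definition continuous01 (op : R -> R -> R) : Prop :=
  let F : R * R -> R := fun p => op p.1 p.2 in
  {within [set p : R * R | in01 p.1 /\ in01 p.2], continuous F}.

Definition nondecr01 (op : R -> R -> R) : Prop :=
  (forall a b, in01 a -> in01 b -> in01 (op a b)) /\
  (forall a a' b b', in01 a -> in01 a' -> in01 b -> in01 b' ->
     a <= a' -> b <= b' -> op a b <= op a' b').

Definition superdistributive (alpha : R) (op : R -> R -> R) : Prop :=
  forall x y, in01 x -> in01 y -> (op x y) `^ alpha >= op (x `^ alpha) (y `^ alpha).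

Definition dominates (A B : R -> R -> R) : Prop :=
  forall a b c e, in01 a -> in01 b -> in01 c -> in01 e ->
    A (B a b) (B c e) >= B (A a c) (A b e).

Definition powop (op : R -> R -> R) (lambda : R) : R -> R -> R :=
  fun x y => (op x y) `^ lambda.
End Ops.

(* Main.v *)
Require Import Defs.
From HB Require Import structures.
From mathcomp Require Import all_boot all_order all_algebra.
From mathcomp Require Import all_classical all_reals all_analysis.
From mathcomp Require Import lra.
Import Order.TTheory GRing.Theory Num.Theory.
Import numFieldNormedType.Exports.
Local Open Scope classical_set_scope.
Local Open Scope ring_scope.

Lemma upset_measurable (d : measure_display) (T : measurableType d) (R : realType)
  (s : T -> R) (S : set T) :
  measurable_fun setT s -> (forall x y, S x -> s x <= s y -> S y) -> measurable S.
Proof.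
move=> ms up.
have mge k : measurable [set x | k <= s x].
  by rewrite -preimage_itvcy -(setTI (s @^-1` _)); apply: ms.
have mgt k : measurable [set x | k < s x].
  by rewrite -preimage_itvoy -(setTI (s @^-1` _)); apply: ms.
case: (pselect (exists x, S x)) => [[x0 Sx0]|nS]; last first.
  have -> : S = set0 by apply/seteqP; split => x //= Sx; apply: nS; exists x.
  exact: measurable0.
case: (pselect (has_lbound (s @` S))) => [hl|nhl]; last first.
  have -> : S = setT.
    apply/seteqP; split => // y _.
    have : ~ lbound (s @` S) (s y) by move=> H; apply: nhl; exists (s y).
    move/existsNP => [z /not_implyP [[x Sx <-] /negP]]; rewrite -ltNge => lt.
    by apply: (up x) => //; exact: ltW.
  exact: measurableT.
have ne : (s @` S) !=set0 by exists (s x0), x0.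
set k := inf (s @` S).
have kle x : S x -> k <= s x.
  move=> Sx; rewrite /k; have [r hr] := hl.
  apply: inf_lbound => //; by exists x.
case: (pselect (exists x, S x /\ s x = k)) => [[x1 [Sx1 ex1]]|nk].
  have -> : S = [set x | k <= s x]; last exact: mge.
  apply/seteqP; split => y /=; first exact: kle.
  by move=> ky; apply: (up x1) => //; rewrite ex1.
have -> : S = [set x | k < s x]; last exact: mgt.
apply/seteqP; split => y /=.
  move=> Sy; rewrite lt_neqAle kle // andbT; apply/negP => /eqP e.
  by apply: nk; exists y.
move=> ky; have [z [x Sx <-] lt] := inf_lt ne ky.
by apply: (up x) => //; exact: ltW.
Qed.
Arguments upset_measurable {d T R s S}.
Section Aux.
Context {R : realType}.

Lemma powR_le (e x y : R) : 0 <= e -> 0 <= x -> x <= y -> x `^ e <= y `^ e.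
Proof. by move=> e0 x0 xy; apply: ge0_ler_powR; rewrite ?nnegrE //; exact: le_trans xy. Qed.

Lemma powR_lt (e x y : R) : 0 < e -> 0 <= x -> x < y -> x `^ e < y `^ e.
Proof. by move=> e0 x0 xy; apply: gt0_ltr_powR; rewrite ?nnegrE // (le_trans x0 (ltW xy)). Qed.

Lemma in01_powR (x e : R) : in01 x -> 0 <= e -> in01 (x `^ e).
Proof.
move=> /andP[x0 x1] e0; apply/andP; split; first exact: powR_ge0.
have h : x `^ e <= 1 `^ e by apply: powR_le.
by rewrite powR1 in h.
Qed.

Lemma powR_anti (x l u : R) : in01 x -> 0 < l -> l <= u -> x `^ u <= x `^ l.
Proof.
move=> /andP[x0 x1] l0 lu; have [->|xn0] := eqVneq x 0.
  rewrite powR0 ?powR_ge0 //; apply/negP => /eqP u0; move: lu; rewrite u0; lra.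
apply: ger_powR => //; rewrite x1 andbT lt_neqAle eq_sym xn0 x0 //.
Qed.

Lemma powR_ge_self (x e : R) : in01 x -> 0 <= e -> e <= 1 -> x <= x `^ e.
Proof.
move=> /andP[x0 x1] e0 e1; have [->|xn0] := eqVneq x 0; first exact: powR_ge0.
apply: ger1_powR => //; rewrite x1 andbT lt_neqAle eq_sym xn0 x0 //.
Qed.

Lemma op_mono (op : R -> R -> R) a a' b b' : semicopula op ->
  in01 a -> in01 a' -> in01 b -> in01 b' -> a <= a' -> b <= b' -> op a b <= op a' b'.
Proof.
move=> [cl m1 m2 _ _] a0 a'0 b0 b'0 aa bb.
exact: le_trans (m1 _ _ _ a0 a'0 b0 aa) (m2 _ _ _ a'0 b0 b'0 bb).
Qed.

Lemma op_in01 (op : R -> R -> R) a b : semicopula op -> in01 a -> in01 b -> in01 (op a b).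
Proof. by move=> [cl _ _ _ _]; apply: cl. Qed.

Lemma op_le_l (op : R -> R -> R) a b : semicopula op -> in01 a -> in01 b -> op a b <= a.
Proof. by move=> [_ _ _ _ mn] ha hb; apply: le_trans (mn _ _ ha hb) _; rewrite ge_min lexx. Qed.

Lemma op_le_r (op : R -> R -> R) a b : semicopula op -> in01 a -> in01 b -> op a b <= b.
Proof. by move=> [_ _ _ _ mn] ha hb; apply: le_trans (mn _ _ ha hb) _; rewrite ge_min lexx orbT. Qed.

End Aux.
Arguments op_in01 {R op a b}.
Arguments op_mono {R op a a' b b'}.
Arguments op_le_l {R op a b}.
Arguments op_le_r {R op a b}.


Lemma mfine (d : measure_display) (T : measurableType d) (R : realType)
  (m : set T -> \bar R) (A : set T) :
  monotone_measure m -> m setT = 1%E -> measurable A ->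
  m A = (fine (m A))%:E /\ in01 (fine (m A)).
Proof.
move=> [m0 _ mono] m1 mA.
have h0 : (0 <= m A)%E by rewrite -m0; apply: mono => //.
have h1 : (m A <= 1)%E by rewrite -m1; apply: mono => //.
move: h0 h1; case: (m A) => [r| |] //= h0 h1.
by split => //; apply/andP; split; rewrite -lee_fin.
Qed.
Arguments mfine {d T R m A}.

Lemma mfine_le (d : measure_display) (T : measurableType d) (R : realType)
  (m : set T -> \bar R) (A B : set T) :
  monotone_measure m -> m setT = 1%E -> measurable A -> measurable B -> A `<=` B ->
  fine (m A) <= fine (m B).
Proof.
move=> mm m1 mA mB AB.
have [eA _] := mfine mm m1 mA; have [eB _] := mfine mm m1 mB.
have [_ _ mono] := mm; have := mono _ _ mA mB AB.
by rewrite eA eB lee_fin.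
Qed.
Arguments mfine_le {d T R m A B}.
Lemma sup_pass1 {R : realType} (op : R -> R -> R) (u b c : R) (S : set R) :
  continuous01 op -> 0 < u -> in01 b -> S !=set0 -> (forall x, S x -> in01 x) ->
  (forall x, S x -> op (x `^ u) b <= c) -> op ((sup S) `^ u) b <= c.
Proof.
move=> Hc u0 hb [x0 Sx0] S01 Hle.
have ub : ubound S 1 by move=> x /S01 /andP[].
have hub : has_ubound S by exists 1.
set X := sup S.
have xX : forall x, S x -> x <= X := fun x Sx => ub_le_sup hub Sx.
have X1 : X <= 1 := ge_sup (ex_intro _ x0 Sx0) ub.
have X0 : 0 <= X by apply: le_trans (xX _ Sx0); case/andP: (S01 _ Sx0).
rewrite leNgt; apply/negP => cl.
have AP : in01 (X `^ u, b).1 /\ in01 (X `^ u, b).2.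
  by split => //; apply: in01_powR; [rewrite /in01 X0 X1 | exact: ltW].
have := (proj1 (subspace_continuousP _ _) Hc) _ AP.
move=> /cvgr_gt /(_ c cl).
move=> [[Q1 Q2] /= [nQ1 nQ2] sub].
move/nbhs_ballP : nQ1 => [del /= del0 bQ1].
have [x Sx hx] : exists2 x, S x & X `^ u - del < x `^ u.
  case: (ltP (X `^ u - del) 0) => [neg|pos].
    by exists x0 => //; exact: lt_le_trans neg (powR_ge0 _ _).
  set l := (X `^ u - del) `^ (u^-1).
  have ll : l `^ u = X `^ u - del by rewrite -powRrM mulVf ?gt_eqF // powRr1.
  have lX : l < X.
    rewrite ltNge; apply/negP => Xl.
    have : X `^ u <= l `^ u by apply: powR_le => //; exact: ltW.
    rewrite ll; lra.
  have [x Sx lx] := sup_gt (ex_intro _ x0 Sx0) lX.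
  by exists x => //; rewrite -ll; apply: powR_lt => //; exact: powR_ge0.
have x0' : 0 <= x by case/andP: (S01 _ Sx).
have hx2 : x `^ u <= X `^ u by apply: powR_le; [exact: ltW | done | exact: xX].
have : c < op (x `^ u) b.
  apply: (sub (x `^ u, b)).
    split => /=; last exact: nbhs_singleton nQ2.
    apply: bQ1; rewrite -ball_normE /= ger0_norm; lra.
  by split => //=; apply: in01_powR; [exact: S01 | exact: ltW].
by rewrite ltNge Hle.
Qed.
Lemma sup01 {R : realType} (S : set R) : S !=set0 -> (forall x, S x -> in01 x) -> in01 (sup S).
Proof.
move=> [x0 Sx0] S01.
have ub : ubound S 1 by move=> x /S01 /andP[].
have hub : has_ubound S by exists 1.
apply/andP; split; last exact: ge_sup (ex_intro _ x0 Sx0) ub.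
apply: le_trans (ub_le_sup hub Sx0); by case/andP: (S01 _ Sx0).
Qed.

Lemma sup_pass2 {R : realType} (op : R -> R -> R) (a t c : R) (S : set R) :
  tnorm op -> continuous01 op -> 0 < t -> in01 a -> S !=set0 -> (forall x, S x -> in01 x) ->
  (forall x, S x -> op a (x `^ t) <= c) -> op a ((sup S) `^ t) <= c.
Proof.
move=> [sc _ comm] Hc t0 ha Sn S01 H.
rewrite comm //; last by apply: in01_powR; [exact: sup01 | exact: ltW].
apply: sup_pass1 => // x Sx; rewrite -comm //; first exact: H.
by apply: in01_powR; [exact: S01 | exact: ltW].
Qed.

Lemma Iint_ub (d : measure_display) (T : measurableType d) (R : realType)
  (op : R -> R -> R) (m : set T -> \bar R) (h : T -> R) (t : R) :
  semicopula op -> monotone_measure m -> m setT = 1%E ->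
  (forall t, measurable [set x | t <= h x]) -> in01 t ->
  op t (fine (m [set x | t <= h x])) <= Iint op m h.
Proof.
move=> sc mm m1 mh t01; rewrite /Iint.
have hub : has_ubound [set op t (fine (m [set x | t <= h x])) | t in [set t : R | 0 <= t <= 1]].
  exists 1 => _ [t' t'01 <-]; have [_ L01] := mfine mm m1 (mh t').
  by case/andP: (op_in01 sc t'01 L01).
by apply: (ub_le_sup hub); exists t.
Qed.

Lemma Iint01 (d : measure_display) (T : measurableType d) (R : realType)
  (op : R -> R -> R) (m : set T -> \bar R) (h : T -> R) :
  semicopula op -> monotone_measure m -> m setT = 1%E ->
  (forall t, measurable [set x | t <= h x]) -> in01 (Iint op m h).
Proof.
move=> sc mm m1 mh; rewrite /Iint; apply: sup01.
  by exists (op 0 (fine (m [set x | 0 <= h x]))), 0 => //; rewrite /= lexx ler01.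
move=> _ [t' t'01 <-]; have [_ L01] := mfine mm m1 (mh t').
exact: op_in01 sc t'01 L01.
Qed.
Theorem corollary3p16 (d : measure_display) (T : measurableType d) (R : realType)
  (f g : T -> R) (star op : R -> R -> R)
  (alpha beta gamma lambda upsilon tau : R) :
  unit_meas_fun f -> unit_meas_fun g -> comonotone f g ->
  continuous01 star -> nondecr01 star ->
  tnorm op -> continuous01 op ->
  0 < alpha -> 0 < beta -> 0 < gamma -> 0 < lambda -> 0 < upsilon -> 0 < tau ->
  alpha * lambda <= 1 -> 1 <= beta * upsilon -> 1 <= gamma * tau ->
  lambda <= tau -> lambda <= upsilon -> alpha <= beta -> alpha <= gamma ->
  superdistributive alpha op -> dominates (powop op lambda) op ->
  forall m : set T -> \bar R, monotone_measure m -> m setT = 1%E ->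
    (Iint op m (fun x => (op (f x) (g x)) `^ alpha)) `^ lambda >=
    op ((Iint op m (fun x => f x `^ beta)) `^ upsilon)
       ((Iint op m (fun x => g x `^ gamma)) `^ tau).
Proof.
move=> [mf f01] [mg g01] cf _ _ tn Hc a0 b0 g0 l0 u0 t0 _ _ _ lt lu ab ag sd dom m mm m1.
have sc : semicopula op by case: tn.
have f0 x : 0 <= f x by case/andP: (f01 x).
have g0' x : 0 <= g x by case/andP: (g01 x).
have comon x y : f x + g x <= f y + g y -> f x <= f y /\ g x <= g y.
  move=> le; have := cf x y => c.
  split; rewrite leNgt; apply/negP => H; nra.
have mlf t : measurable [set x | t <= f x `^ beta].
  apply: (upset_measurable mf) => x y /= tx fxy.
  by apply: le_trans tx _; apply: powR_le => //; exact: ltW.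
have mlg t : measurable [set x | t <= g x `^ gamma].
  apply: (upset_measurable mg) => x y /= tx fxy.
  by apply: le_trans tx _; apply: powR_le => //; exact: ltW.
have mlh t : measurable [set x | t <= (op (f x) (g x)) `^ alpha].
  apply: (upset_measurable (measurable_realfun.measurable_funD mf mg)) => x y /= tx sxy.
  have [fxy gxy] := comon _ _ sxy.
  apply: le_trans tx _; apply: powR_le; first exact: ltW.
    by case/andP: (op_in01 sc (f01 x) (g01 x)).
  exact: (op_mono sc) (f01 x) (f01 y) (g01 x) (g01 y) fxy gxy.
set Ih := Iint op m (fun x => (op (f x) (g x)) `^ alpha).
have Ih01 : in01 Ih by apply: Iint01.
rewrite /Iint.
have ne (h : T -> R) : [set op t (fine (m [set x | t <= h x])) | t in [set t : R | 0 <= t <= 1]] !=set0.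
  by exists (op 0 (fine (m [set x | 0 <= h x]))), 0 => //; rewrite /= lexx ler01.
have el01 (h : T -> R) : (forall t, measurable [set x | t <= h x]) ->
    forall y, [set op t (fine (m [set x | t <= h x])) | t in [set t : R | 0 <= t <= 1]] y -> in01 y.
  move=> mh _ [t' t'01 <-]; have [_ L01] := mfine mm m1 (mh t').
  exact: op_in01 sc t'01 L01.
apply: sup_pass2 => //; [apply: in01_powR; last exact: ltW; apply: sup01; [exact: ne | exact: el01] | exact: el01 |].
move=> _ [uu uu01 <-].
set b := fine (m [set x | uu <= g x `^ gamma]).
have [_ b01] := mfine mm m1 (mlg uu).
apply: sup_pass1 => //; [ | exact: el01 | ].
  by apply: in01_powR; [exact: op_in01 | exact: ltW].
move=> _ [s s01 <-].
set a := fine (m [set x | s <= f x `^ beta]).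
have [_ a01] := mfine mm m1 (mlf s).
set A := [set x | s <= f x `^ beta].
set B := [set x | uu <= g x `^ gamma].
have nested : A `<=` B \/ B `<=` A.
  case: (pselect (A `<=` B)) => [|nAB]; first by left.
  right; have : ~ (forall x, A x -> B x) by [].
  move/existsNP => [x /not_implyP [Ax nBx]] y By.
  rewrite /A /= in Ax *; rewrite /B /= in nBx By.
  have gxy : g x < g y.
    rewrite ltNge; apply/negP => gyx; apply: nBx; apply: le_trans By _.
    by apply: powR_le => //; exact: ltW.
  have fxy : f x <= f y by have c := cf x y; rewrite leNgt; apply/negP => H; nra.
  by apply: le_trans Ax _; apply: powR_le => //; exact: ltW.
have abe : 0 <= alpha / beta by apply: divr_ge0; exact: ltW.
have age : 0 <= alpha / gamma by apply: divr_ge0; exact: ltW.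
have ab1 : alpha / beta <= 1 by rewrite ler_pdivrMr // mul1r.
have ag1 : alpha / gamma <= 1 by rewrite ler_pdivrMr // mul1r.
set s' := s `^ (alpha / beta).
set u' := uu `^ (alpha / gamma).
have s'01 : in01 s' by exact: in01_powR.
have u'01 : in01 u' by exact: in01_powR.
set w := op s' u'.
have w01 : in01 w by exact: op_in01.
set H := [set x | w <= (op (f x) (g x)) `^ alpha].
have AB_H x : A x -> B x -> H x.
  rewrite /A /B /H /= => Ax Bx.
  have e1 : s' <= f x `^ alpha.
    have : s `^ (alpha / beta) <= (f x `^ beta) `^ (alpha / beta).
      by apply: powR_le => //; case/andP: s01.
    by rewrite -powRrM (mulrC beta) divfK ?gt_eqF.
  have e2 : u' <= g x `^ alpha.
    have : uu `^ (alpha / gamma) <= (g x `^ gamma) `^ (alpha / gamma).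
      by apply: powR_le => //; case/andP: uu01.
    by rewrite -powRrM (mulrC gamma) divfK ?gt_eqF.
  apply: le_trans (sd _ _ (f01 x) (g01 x)).
  apply: (op_mono sc) => //; apply: in01_powR => //; try exact: ltW; [exact: f01 | exact: g01].
set hv := fine (m H).
have [_ hv01] := mfine mm m1 (mlh w).
have hvge : op a b <= hv.
  case: nested => [AsB|BsA].
    apply: le_trans (op_le_l sc a01 b01) _; apply: (mfine_le mm m1 (mlf s) (mlh w)).
    by move=> x Ax; apply: AB_H => //; exact: AsB.
  apply: le_trans (op_le_r sc a01 b01) _; apply: (mfine_le mm m1 (mlg uu) (mlh w)).
  by move=> x Bx; apply: AB_H => //; exact: BsA.
have IhW : op w hv <= Ih by apply: Iint_ub.
have ab01 : in01 (op a b) by exact: op_in01.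
have sa01 : in01 (op s a) by exact: op_in01.
have ub01 : in01 (op uu b) by exact: op_in01.
have s'a01 : in01 (op s' a) by exact: op_in01.
have u'b01 : in01 (op u' b) by exact: op_in01.
have ss' : s <= s' by exact: powR_ge_self.
have uu' : uu <= u' by exact: powR_ge_self.
apply: (@le_trans _ _ (op (op s' a `^ lambda) (op u' b `^ lambda))).
  apply: (op_mono sc); try (apply: in01_powR => //; exact: ltW).
    apply: le_trans (powR_anti _ _ _ sa01 l0 lu) _; apply: powR_le; first exact: ltW.
      by case/andP: sa01.
    by apply: (op_mono sc) => //.
  apply: le_trans (powR_anti _ _ _ ub01 l0 lt) _; apply: powR_le; first exact: ltW.
    by case/andP: ub01.
  by apply: (op_mono sc) => //.
apply: le_trans (dom _ _ _ _ s'01 u'01 a01 b01) _; rewrite /powop.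
apply: powR_le; first exact: ltW.
  by case/andP: (op_in01 sc w01 ab01).
apply: le_trans IhW; exact: (op_mono sc).
Qed.
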